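(* Consider the online asynchronous testing setting with conflict sets described in the context. Suppose that the null $p$-values are super-uniform conditional on the non-conflicting information available at their decision time, i.e. for every $t\in\mathcal{H}^0$ and every $u\in[0,1]$, $\mathbb{P}(P_t\le u\mid \mathcal{F}^{-\mathcal{X}^{E_t}})\le u$. Then any LORD* procedure and any SAFFRON* procedure with target level $\alpha$ (where $\mathcal{F}$ denotes the LORD* filtration for LORD* and the SAFFRON* filtration for SAFFRON* ) guarantee $\mathrm{mFDR}(t)\le\alpha$ for all $t\in\mathbb{N}$.
   Context: Hypotheses $H_1,H_2,\dots$ are tested; the test of $H_t$ starts at step $t$, is run at a test level $\alpha_t\ge 0$ (and, for SAFFRON*-type procedures, uses a candidacy threshold $\lambda_t$ with $\alpha_t\le\lambda_t<1$), and produces a $p$-value $P_t$. $\mathcal{H}^0\subseteq\mathbb{N}$ is the fixed (unknown) set of indices of true null hypotheses. Each test $t$ has a fixed (deterministic) decision time $E_t\in\mathbb{N}$ with $E_t\ge t$. Let $R_t=\mathbf{1}\{P_t\le\alpha_t\}$ and $C_t=\mathbf{1}\{P_t\le\lambda_t\}$. Let $\{L_t\}$ be a fixed sequence of nonnegative integer lags with $L_{t+1}\le L_t+1$. The conflict set of test $t$ is $\mathcal{X}^t=\{i\in[t-1]:E_i\ge t\}\cup\big(\{t-L_t,\dots,t-1\}\cap[t-1]\big)$. The non-conflicting $\sigma$-algebras are $\mathcal{L}^{-\mathcal{X}^t}=\sigma(R_i: i\le t-1,\ i\notin\mathcal{X}^t)$ (LORD* filtration) and $\mathcal{S}^{-\mathcal{X}^t}=\sigma(R_i,C_i: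 i\le t-1,\ i\notin\mathcal{X}^t)$ (SAFFRON* filtration); $\mathcal{F}^{-\mathcal{X}^t}$ denotes the relevant one. The set of rejections by time $t$ is $\mathcal{R}(t)=\{i\in[t]: E_i\le t,\ P_i\le\alpha_i\}$ and $\mathcal{V}(t)=\mathcal{R}(t)\cap\mathcal{H}^0$; $\mathrm{mFDR}(t)=\mathbb{E}|\mathcal{V}(t)|/\mathbb{E}[|\mathcal{R}(t)|\vee 1]$. A LORD* procedure is any rule choosing each $\alpha_t\ge0$ to be $\mathcal{L}^{-\mathcal{X}^t}$-measurable such that, for all $t\in\mathbb{N}$, $\sum_{j\le t}\alpha_j\le \alpha\big((\sum_{j<t,\,j\notin\mathcal{X}^t}R_j)\vee1\big)$. A SAFFRON* procedure is any rule choosing $\alpha_t,\lambda_t$ (with $0\le\alpha_t\le\lambda_t<1$) to be $\mathcal{S}^{-\mathcal{X}^t}$-measurable such that, for all $t\in\mathbb{N}$, $\sum_{j<t,\,j\notin\mathcal{X}^t}\frac{\alpha_j}{1-\lambda_j}\mathbf{1}\{P_j>\lambda_j\}+\sum_{j\in\mathcal{X}^t\cup\{t\}}\frac{\alpha_j}{1-\lambda_j}\le\alpha\big((\sum_{j<t,\,j\notin\mathcal{X}^t}R_j)\vee1\big)$. *)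

(* Defs.v *)
From HB Require Import structures.
From mathcomp Require Import all_boot all_order all_algebra.
From mathcomp Require Import all_classical all_reals all_analysis.
Set Implicit Arguments. Unset Strict Implicit. Unset Printing Implicit Defensive.
Import Order.TTheory GRing.Theory Num.Theory.
Local Open Scope classical_set_scope.
Local Open Scope ring_scope.

(* Tests are indexed by 1, 2, 3, ...; the value at index 0 is never used. *)

Definition in_conflict (E L : nat -> nat) (t i : nat) : bool :=
  (1 <= i < t)%N && ((t <= E i)%N || (t - L t <= i)%N).

Definition nonconf (E L : nat -> nat) (t i : nat) : bool :=
  (1 <= i < t)%N && ~~ in_conflict E L t i.

Definition sigma_of {T V : Type} (Y : T -> V) : set (set T) :=
  [set A | exists B : set V, A = Y @^-1` B].

Definition F_measurable {T : Type} {R : realType} (F : set (set T)) (f : T -> R) :=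
  forall B : set R, measurable B -> F (f @^-1` B).

Section Defs.
Context {d : measure_display} {T : measurableType d} {R : realType}.

Definition rej (pv alpha : nat -> T -> R) (t : nat) (w : T) : bool :=
  pv t w <= alpha t w.
Definition cand (pv lam : nat -> T -> R) (t : nat) (w : T) : bool :=
  pv t w <= lam t w.

Definition LORD_filt (E L : nat -> nat) (pv alpha : nat -> T -> R) (t : nat)
  : set (set T) :=
  sigma_of (fun w : T => fun i : nat =>
              if nonconf E L t i then rej pv alpha i w else false).

Definition SAFFRON_filt (E L : nat -> nat) (pv alpha lam : nat -> T -> R)
  (t : nat) : set (set T) :=
  sigma_of (fun w : T => fun i : nat =>
              if nonconf E L t i then (rej pv alpha i w, cand pv lam i w)
              else (false, false)).

Definition nrej (E : nat -> nat) (pv alpha : nat -> T -> R) (t : nat) (w : T) : R :=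
  \sum_(1 <= i < t.+1 | (E i <= t)%N) (rej pv alpha i w)%:R.

Definition nfalse (H0 : set nat) (E : nat -> nat) (pv alpha : nat -> T -> R)
  (t : nat) (w : T) : R :=
  \sum_(1 <= i < t.+1 | (E i <= t)%N && (i \in H0)) (rej pv alpha i w)%:R.

(* mFDR(t) = E|V(t)| / E[|R(t)| ∨ 1]  (both expectations are finite, the
   integrands being bounded). *)
Definition mFDR (P : probability T R) (H0 : set nat) (E : nat -> nat)
  (pv alpha : nat -> T -> R) (t : nat) : R :=
  fine ('E_P[nfalse H0 E pv alpha t])%E /
  fine ('E_P[fun w => Num.max (nrej E pv alpha t w) 1%R])%E.

(* Conditional super-uniformity of null p-values:
   P(P_t <= u | F_t) <= u a.s., written out via the defining property of
   conditional probability: for every A in F_t, P({P_t <= u} ∩ A) <= u P(A). *)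
Definition cond_superuniform (P : probability T R) (H0 : set nat)
  (pv : nat -> T -> R) (F : nat -> set (set T)) : Prop :=
  forall t : nat, (1 <= t)%N -> t \in H0 -> forall u : R, 0 <= u <= 1 ->
    forall A : set T, F t A ->
      (P (A `&` [set w | (pv t w <= u)%R]) <= u%:E * P A)%E.

Definition LORD_star (E L : nat -> nat) (alpha : R) (pv alphas : nat -> T -> R)
  : Prop :=
  forall t : nat, (1 <= t)%N ->
    F_measurable (LORD_filt E L pv alphas t) (alphas t) /\
    (forall w, 0 <= alphas t w) /\
    (forall w, \sum_(1 <= j < t.+1) alphas j w <=
       alpha * Num.max (\sum_(1 <= j < t | nonconf E L t j)
                          (rej pv alphas j w)%:R) 1).

Definition SAFFRON_star (E L : nat -> nat) (alpha : R)
  (pv alphas lams : nat -> T -> R) : Prop :=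
  forall t : nat, (1 <= t)%N ->
    F_measurable (SAFFRON_filt E L pv alphas lams t) (alphas t) /\
    F_measurable (SAFFRON_filt E L pv alphas lams t) (lams t) /\
    (forall w, 0 <= alphas t w /\ alphas t w <= lams t w /\ lams t w < 1) /\
    (forall w,
       \sum_(1 <= j < t | nonconf E L t j)
          alphas j w / (1 - lams j w) * ((lams j w < pv j w)%R)%:R
       + \sum_(1 <= j < t.+1 | in_conflict E L t j || (j == t))
          alphas j w / (1 - lams j w)
       <= alpha * Num.max (\sum_(1 <= j < t | nonconf E L t j)
                             (rej pv alphas j w)%:R) 1).

End Defs.

(* Main.v *)
Require Import Defs.
From HB Require Import structures.
From mathcomp Require Import all_boot all_order all_algebra.
From mathcomp Require Import all_classical all_reals all_analysis.
From mathcomp Require Import measurable_realfun.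
From mathcomp Require Import ring lra zify.
Import Order.TTheory GRing.Theory Num.Theory.
Local Open Scope classical_set_scope.
Local Open Scope ring_scope.

Section Generic.
Context {d : measure_display} {T : measurableType d} {R : realType}.
Variable P : probability T R.

Lemma sigma_of_inv (V : Type) (Y : T -> V) (f : T -> R) :
  F_measurable (sigma_of Y) f -> forall w w', Y w = Y w' -> f w = f w'.
Proof.
move=> mf w w' Yww.
have [B hB] := mf [set f w] (measurable_set1 (f w)).
have h1 : (f @^-1` [set f w]) w by [].
rewrite hB in h1.
have h2 : (Y @^-1` B) w' by rewrite /preimage /= -Yww.
rewrite -hB in h2.
exact/esym.
Qed.

Lemma factor_fin (K : finType) (tau : T -> K) (f : T -> R) :
  (forall w w', tau w = tau w' -> f w = f w') ->
  exists h : K -> R, forall w, f w = h (tau w).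
Proof.
move=> H.
have: forall b : K, exists r : R, forall w, tau w = b -> f w = r.
  move=> b; case: (pselect (exists w, tau w = b)) => [[w0 hw0]|nb].
    by exists (f w0) => w hw; apply: H; rewrite hw hw0.
  by exists 0 => w hw; exfalso; apply: nb; exists w.
case/choice => h hh; exists h => w; exact: hh.
Qed.

Lemma factor_decomp (K : finType) (tau : T -> K) (h : K -> R) (D : K -> T -> bool) w :
  h (tau w) * (D (tau w) w)%:R =
  \sum_(b : K) h b * \1_(tau @^-1` [set b] `&` [set w | D b w]) w.
Proof.
rewrite (bigD1 (tau w)) //= indicE big1 ?addr0.
  case hD: (D (tau w) w).
    by rewrite mem_set.
  by rewrite memNset //= => -[_ /=]; rewrite hD.
move=> b hb; rewrite indicE memNset ?mulr0 //= => -[e _]; move/eqP: hb; apply.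
by rewrite -e.
Qed.

Lemma factor_meas (K : finType) (tau : T -> K) (h : K -> R) :
  (forall b, measurable (tau @^-1` [set b])) ->
  measurable_fun setT (fun w => h (tau w)).
Proof.
move=> mt.
have E : forall w, h (tau w) = \sum_(b : K) h b *
   \1_(tau @^-1` [set b] `&` [set w | (fun (_ : K) (_ : T) => true) b w]) w.
  by move=> w; rewrite -(factor_decomp _ tau h (fun _ _ => true)) mulr1.
rewrite (funext E).
apply: measurable_sum => b; apply: measurable_funM; first exact: measurable_cst.
apply: measurable_indic; apply: measurableI; [exact: mt | ].
rewrite (_ : [set _ | _] = setT) //; by apply/seteqP; split.
Qed.

Lemma EXP (K : finType) (tau : T -> K) (h : K -> R) (D : K -> T -> bool) :
  (forall b, measurable (tau @^-1` [set b])) ->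
  (forall b, measurable [set w | D b w]) ->
  (forall b, 0 <= h b) ->
  (\int[P]_w (h (tau w) * (D (tau w) w)%:R)%:E =
   \sum_(b : K) (h b)%:E * P (tau @^-1` [set b] `&` [set w | D b w]))%E.
Proof.
move=> mt mD h0.
transitivity (\int[P]_w (\sum_(b : K) (h b * \1_(tau @^-1` [set b] `&` [set w | D b w]) w)%:E))%E.
  apply: eq_integral => w _; rewrite sumEFin; congr (_%:E).
  exact: factor_decomp.
rewrite ge0_integral_sum //; last first.
- by move=> b w _; rewrite lee_fin mulr_ge0.
- move=> b; apply/measurable_EFinP; apply: measurable_funM; first exact: measurable_cst.
  by apply: measurable_indic; apply: measurableI.
apply: eq_bigr => b _.
under eq_integral do rewrite EFinM.
rewrite ge0_integralZl_EFin //.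
all: try (by move=> w _; rewrite lee_fin).
all: try (by apply/measurable_EFinP; apply: measurable_indic; apply: measurableI).
by rewrite integral_indic ?setIT //; apply: measurableI.
Qed.


Lemma PE (X : set T) : measurable X -> P X = (fine (P X))%:E.
Proof. by move=> mX; rewrite fineK // fin_num_measure. Qed.

Lemma P_ge0 (X : set T) : 0 <= fine (P X).
Proof. by apply: fine_ge0. Qed.

Lemma setT_true : [set w : T | true] = setT.
Proof. by apply/seteqP; split. Qed.

Lemma K1 (K : finType) (tau : T -> K) (p : T -> R) (h : K -> R) :
  (forall b, measurable (tau @^-1` [set b])) ->
  measurable_fun setT p ->
  (forall b, 0 <= h b) ->
  (forall b u, 0 <= u <= 1 ->
     (P (tau @^-1` [set b] `&` [set w | (p w <= u)%R]) <= u%:E * P (tau @^-1` [set b]))%E) ->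
  (\int[P]_w ((p w <= h (tau w))%R%:R)%:E <= \int[P]_w (h (tau w))%:E)%E.
Proof.
move=> mt mp h0 su.
have mD : forall b, measurable [set w | p w <= h b].
  by move=> b; rewrite -[X in measurable X]setTI; apply: measurable_fun_le.
have -> : (\int[P]_w ((p w <= h (tau w))%R%:R)%:E =
   \int[P]_w ((fun _ => 1) (tau w) * ((fun b w => p w <= h b) (tau w) w)%:R)%:E)%E.
  by apply: eq_integral => w _ /=; rewrite mul1r.
rewrite (EXP _ tau (fun _ => 1) (fun b w => p w <= h b)) //; try by move=> b; rewrite ler01.
have -> : (\int[P]_w (h (tau w))%:E =
   \int[P]_w (h (tau w) * ((fun b w => true) (tau w) w)%:R)%:E)%E.
  by apply: eq_integral => w _ /=; rewrite mulr1.
rewrite (EXP _ tau h (fun b w => true)) //; try by (move=> b; rewrite setT_true).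
apply: lee_sum => b _; rewrite setT_true setIT mul1e.
case: (lerP (h b) 1) => hb.
  by apply: su; rewrite h0 hb.
apply: (le_trans (measureIl P (mt b) (mD b))).
apply: lee_pemull => //; rewrite lee_fin ltW //.
Qed.

Lemma K2 (K : finType) (tau : T -> K) (p : T -> R) (h l : K -> R) :
  (forall b, measurable (tau @^-1` [set b])) ->
  measurable_fun setT p ->
  (forall b, 0 <= h b) ->
  (forall b, 0 <= l b < 1) ->
  (forall b u, 0 <= u <= 1 ->
     (P (tau @^-1` [set b] `&` [set w | (p w <= u)%R]) <= u%:E * P (tau @^-1` [set b]))%E) ->
  (\int[P]_w (h (tau w))%:E <=
   \int[P]_w (h (tau w) / (1 - l (tau w)) * (l (tau w) < p w)%R%:R)%:E)%E.
Proof.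
move=> mt mp h0 l01 su.
have mD : forall b, measurable [set w | l b < p w].
  move=> b; rewrite (_ : [set w | l b < p w] = ~` [set w | p w <= l b]).
    by apply: measurableC; rewrite -[X in measurable X]setTI; apply: measurable_fun_le.
  by apply/seteqP; split => w /=; rewrite real_ltNge ?num_real //; move/negP.
have mD' : forall b, measurable [set w | p w <= l b].
  by move=> b; rewrite -[X in measurable X]setTI; apply: measurable_fun_le.
have -> : (\int[P]_w (h (tau w))%:E =
   \int[P]_w (h (tau w) * ((fun b w => true) (tau w) w)%:R)%:E)%E.
  by apply: eq_integral => w _ /=; rewrite mulr1.
rewrite (EXP _ tau h (fun b w => true)) //; try by (move=> b; rewrite setT_true).
rewrite (EXP _ tau (fun b => h b / (1 - l b)) (fun b w => l b < p w)) //; try by (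
  move=> b; have /andP[l0 l1] := l01 b; apply: divr_ge0 => //; by rewrite subr_ge0 ltW).
apply: lee_sum => b _; rewrite setT_true setIT.
have /andP[l0 l1] := l01 b.
have hsu := su b (l b) ltac:(by rewrite l0 ltW).
set A := tau @^-1` [set b].
have mA : measurable A by exact: mt.
have eA : (P A = P (A `&` [set w | (p w <= l b)%R]) + P (A `&` [set w | (l b < p w)%R]))%E.
  rewrite -measureU //; try by apply: measurableI.
    congr (P _); apply/seteqP; split => w /=.
      by move=> Aw; case: (lerP (p w) (l b)) => hw; [left|right].
    by case=> -[].
  apply/seteqP; split => w //= [[_ h1] [_ h2]].
  by move: (lt_le_trans h2 h1); rewrite ltxx.
have mA1 : measurable (A `&` [set w | (p w <= l b)%R]) by apply: measurableI.
have mA2 : measurable (A `&` [set w | (l b < p w)%R]) by apply: measurableI.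
move: hsu eA; rewrite (PE _ mA) (PE _ mA1) (PE _ mA2).
rewrite -EFinD -!EFinM !lee_fin => hsu [eA].
set z := fine (P A) in hsu eA *.
set x := fine (P (A `&` [set w | p w <= l b])) in hsu eA *.
set y := fine (P (A `&` [set w | l b < p w])) in eA *.
have hy : (1 - l b) * z <= y by rewrite eA; nra.
have hl : 1 - l b != 0 by rewrite subr_eq0 gt_eqF.
rewrite (_ : h b * z = h b / (1 - l b) * ((1 - l b) * z)); last by field.
apply: ler_wpM2l => //; apply: divr_ge0 => //; by rewrite subr_ge0 ltW.
Qed.

End Generic.

Section Tau.
Context {d : measure_display} {T : measurableType d} {R : realType}.
Variable P : probability T R.

Definition tau_of (V : finType) (Y : T -> nat -> V) (n : nat) (w : T) : {ffun 'I_n -> V} :=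
  [ffun k : 'I_n => Y w (nat_of_ord k)].

Lemma tau_inj (V : finType) (Y : T -> nat -> V) n v0 :
  (forall w k, (n <= k)%N -> Y w k = v0) ->
  forall w w', tau_of V Y n w = tau_of V Y n w' -> Y w = Y w'.
Proof.
move=> hd w w' e; apply/funext => k.
case: (ltnP k n) => hk; last by rewrite !hd.
by have := congr1 (fun f : {ffun _ -> _} => f (Ordinal hk)) e; rewrite /tau_of !ffunE.
Qed.

Lemma tau_pre (V : finType) (Y : T -> nat -> V) n (b : {ffun 'I_n -> V}) :
  tau_of V Y n @^-1` [set b] = \bigcap_(k in [set: 'I_n]) [set w | Y w k = b k].
Proof.
apply/seteqP; split => w /=.
  by move=> <- k _ /=; rewrite ffunE.
by move=> h; apply/ffunP => k; rewrite ffunE; apply: h.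
Qed.

Lemma tau_meas (V : finType) (Y : T -> nat -> V) n :
  (forall k v, (k < n)%N -> measurable [set w | Y w k = v]) ->
  forall b, measurable (tau_of V Y n @^-1` [set b]).
Proof.
move=> hm b; rewrite tau_pre; apply: fin_bigcap_measurable; first exact: finite_finset.
by move=> k _; apply: hm.
Qed.

Lemma tau_sigma (V : finType) (Y : T -> nat -> V) n b :
  sigma_of Y (tau_of V Y n @^-1` [set b]).
Proof.
exists [set y | forall k : 'I_n, y k = b k].
apply/seteqP; split => w /=.
  by move=> <- k; rewrite ffunE.
by move=> h; apply/ffunP => k; rewrite ffunE; apply: h.
Qed.

Lemma factor_finQ (K : finType) (tau : T -> K) (f : T -> R) (Q : R -> Prop) :
  Q 0 -> (forall w, Q (f w)) ->
  (forall w w', tau w = tau w' -> f w = f w') ->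
  exists h : K -> R, (forall w, f w = h (tau w)) /\ (forall b, Q (h b)).
Proof.
move=> Q0 Qf H.
have: forall b : K, exists r : R, Q r /\ forall w, tau w = b -> f w = r.
  move=> b; case: (pselect (exists w, tau w = b)) => [[w0 hw0]|nb].
    by exists (f w0); split => // w hw; apply: H; rewrite hw hw0.
  by exists 0; split => // w hw; exfalso; apply: nb; exists w.
case/choice => h hh; exists h; split => [w|b]; [exact: (hh _).2 | exact: (hh b).1].
Qed.

Lemma meas_bool (b : T -> bool) : measurable [set w | b w] ->
  forall v, measurable [set w | b w = v].
Proof.
move=> mb [] //.
rewrite (_ : [set w | b w = false] = ~` [set w | b w]); first exact: measurableC.
by apply/seteqP; split => w /=; [move=> -> | move/negP/negbTE].
Qed.

Lemma meas_const (c v : bool) : measurable [set w : T | c = v].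
Proof.
case: (eqVneq c v) => [->|ne].
  by rewrite (_ : [set w : T | v = v] = setT) //; apply/seteqP; split.
rewrite (_ : [set w : T | c = v] = set0) //.
by apply/seteqP; split => w //= e; move: ne; rewrite e eqxx.
Qed.

Lemma mind (b : T -> bool) : measurable [set w | b w] ->
  measurable_fun setT (fun w => (b w)%:R : R).
Proof.
move=> mb; rewrite (_ : (fun w => _) = \1_[set w | b w]).
  exact: measurable_indic.
apply/funext => w; rewrite indicE; case hb: (b w).
  by rewrite mem_set.
by rewrite memNset //= hb.
Qed.

Lemma msum (I : eqType) (s : seq I) (Pr : pred I) (h : I -> T -> R) :
  (forall i, i \in s -> measurable_fun setT (h i)) ->
  measurable_fun setT (fun x => \sum_(i <- s | Pr i) h i x).
Proof.
elim: s => [|a s IH] hm.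
  rewrite (_ : (fun x => _) = cst 0); first exact: measurable_cst.
  by apply/funext => x; rewrite big_nil.
rewrite (_ : (fun x => _) = (fun x => (if Pr a then h a x else 0) +
    \sum_(i <- s | Pr i) h i x)); last first.
  by apply/funext => x; rewrite big_cons; case: (Pr a); rewrite ?add0r.
apply: measurable_funD; last by apply: IH => i hi; apply: hm; rewrite inE hi orbT.
case: (Pr a); [apply: hm; exact: mem_head | exact: measurable_cst].
Qed.

Lemma int_sum (s : seq nat) (f : nat -> T -> R) :
  (forall i, i \in s -> measurable_fun setT (f i)) ->
  (forall i w, i \in s -> 0 <= f i w) ->
  (\int[P]_w (\sum_(i <- s) f i w)%:E = \sum_(i <- s) \int[P]_w (f i w)%:E)%E.
Proof.
move=> hm h0.
pose g i w := if i \in s then f i w else 0.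
have -> : (\int[P]_w (\sum_(i <- s) f i w)%:E = \int[P]_w (\sum_(i <- s) (g i w)%:E))%E.
  apply: eq_integral => w _; rewrite sumEFin; congr (_%:E).
  by rewrite big_seq [RHS]big_seq; apply: eq_bigr => i hi; rewrite /g hi.
rewrite ge0_integral_sum //.
- rewrite big_seq [RHS]big_seq; apply: eq_bigr => i hi.
  by apply: eq_integral => w _; rewrite /g hi.
- move=> i; apply/measurable_EFinP; rewrite /g; case hi: (i \in s) => /=.
    exact: hm.
  exact: measurable_cst.
- by move=> i w _; rewrite /g; case hi: (i \in s); rewrite lee_fin ?h0.
Qed.

Lemma fin_div (X Y : \bar R) (a : R) : (0 <= X)%E -> (X <= a%:E * Y)%E -> (1 <= Y)%E ->
  Y \is a fin_num -> fine X / fine Y <= a.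
Proof.
move=> X0 XY Y1; case: Y XY Y1 => [y| |] //= XY Y1 _.
rewrite lee_fin in Y1.
move: X X0 XY => [x| |] //=; rewrite -EFinM.
  rewrite !lee_fin => x0 xy; rewrite ler_pdivrMr //; exact: lt_le_trans ltr01 Y1.
Qed.

Lemma ex_point : exists w : T, True.
Proof.
case: (pselect (exists w : T, True)) => // nT; exfalso.
have : P setT = 0%E.
  rewrite (_ : setT = set0) ?measure0 //.
  by apply/seteqP; split => w // _; apply: nT; exists w.
by rewrite probability_setT => -[] /eqP; rewrite oner_eq0.
Qed.

Lemma sum_ge0_iota m n (Pr : pred nat) (F : nat -> R) :
  (forall j, (m <= j < n)%N -> 0 <= F j) -> 0 <= \sum_(m <= j < n | Pr j) F j.
Proof.
move=> h; rewrite big_nat_cond; apply: sumr_ge0 => j /andP[hj _]; exact: h.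
Qed.

End Tau.

Lemma subL_mono (L : nat -> nat) : (forall t, (L t.+1 <= (L t).+1)%N) ->
  forall i j, (i <= j)%N -> (i - L i <= j - L j)%N.
Proof.
move=> hL i j; elim: j => [|j IH]; first by rewrite leqn0 => /eqP ->.
rewrite leq_eqVlt => /orP[/eqP -> //|hij].
rewrite ltnS in hij; have := IH hij; have := hL j; lia.
Qed.

Lemma nonconf_mono (E L : nat -> nat) : (forall t, (L t.+1 <= (L t).+1)%N) ->
  forall i j k, (i <= j)%N -> nonconf E L i k -> nonconf E L j k.
Proof.
move=> hL i j k hij; have := subL_mono _ hL _ _ hij.
rewrite /nonconf /in_conflict; lia.
Qed.

Lemma nonconf_tt (E L : nat -> nat) t : nonconf E L t t = false.
Proof. by rewrite /nonconf ltnn andbF. Qed.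

Section SumLemmas.
Context {R : realType}.

Lemma nc_sum_le (E L : nat -> nat) t (r : nat -> R) : (1 <= t)%N ->
  (forall i, 0 <= r i) ->
  \sum_(1 <= j < t | nonconf E L t j) r j <= \sum_(1 <= i < t.+1 | (E i <= t)%N) r i.
Proof.
move=> t1 r0; rewrite big_mkcond [X in _ <= X]big_mkcond big_nat_recr //=.
apply: le_trans (_ : _ <= \sum_(1 <= i < t) (if (E i <= t)%N then r i else 0)) _.
  apply: ler_sum_nat => i hi.
  case hn: (nonconf E L t i); last by case: ifP.
  have -> : (E i <= t)%N by move: hn; rewrite /nonconf /in_conflict; lia.
  by [].
have hy : 0 <= (if (E t <= t)%N then r t else 0) by case: ifP.
by apply: (le_trans (lexx _)); rewrite -[X in X <= _]addr0 lerD2l.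
Qed.

Lemma split_sum (E L : nat -> nat) t (a c : nat -> R) :
  (forall j, (1 <= j <= t)%N -> 0 <= a j) -> (forall j, 0 <= c j <= 1) ->
  \sum_(1 <= j < t.+1) a j * c j <=
  \sum_(1 <= j < t | nonconf E L t j) a j * c j +
  \sum_(1 <= j < t.+1 | in_conflict E L t j || (j == t)) a j.
Proof.
move=> a0 c01; rewrite (bigID (nonconf E L t)) /=; apply: lerD.
  case: t a0 => [|t] a0; first by rewrite !big_geq.
  rewrite big_mkcond big_nat_recr //= nonconf_tt addr0 -big_mkcond //.
rewrite big_mkcond [X in _ <= X]big_mkcond; apply: ler_sum_nat => j hj.
have hj' : (1 <= j <= t)%N by move: hj; lia.
have ha := a0 j hj'; have /andP[c0 c1] := c01 j.
case hn: (nonconf E L t j) => /=.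
  by case: ifP.
have -> : in_conflict E L t j || (j == t).
  by move: hn hj'; rewrite /nonconf /in_conflict; lia.
by rewrite ler_piMr.
Qed.

End SumLemmas.

Section Final.
Context {d : measure_display} {T : measurableType d} {R : realType}.
Variables (P : probability T R) (H0 : set nat) (E : nat -> nat) (pv alphas : nat -> T -> R).
Hypothesis hpv : forall t, measurable_fun setT (pv t).
Hypothesis hm : forall i, (1 <= i)%N -> measurable_fun setT (alphas i).

Lemma rej_meas k : (1 <= k)%N -> forall v, measurable [set w | rej pv alphas k w = v].
Proof.
move=> hk; apply: meas_bool; rewrite /rej -[X in measurable X]setTI.
by apply: measurable_fun_le => //; apply: hm.
Qed.

Lemma mrej i : (1 <= i)%N -> measurable_fun setT (fun w => (rej pv alphas i w)%:R : R).
Proof. by move=> hi; apply: mind; exact: (rej_meas i hi true). Qed.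

Lemma nrej_meas t : measurable_fun setT (nrej E pv alphas t).
Proof.
apply: msum => i; rewrite mem_index_iota => /andP[hi _]; exact: mrej.
Qed.

Lemma nrej_ge0 t w : 0 <= nrej E pv alphas t w.
Proof. by apply: sumr_ge0 => i _; rewrite ler0n. Qed.

Lemma nrej_le t w : nrej E pv alphas t w <= t%:R.
Proof.
rewrite /nrej big_mkcond.
apply: le_trans (_ : _ <= \sum_(1 <= i < t.+1) 1) _.
  by apply: ler_sum => i _; case: ifP => _; rewrite ?lern1 ?leq_b1.
by rewrite sumr_const_nat subn1.
Qed.

Lemma max_meas t : measurable_fun setT (fun w => Num.max (nrej E pv alphas t w) 1).
Proof. apply: measurable_maxr; [exact: nrej_meas | exact: measurable_cst]. Qed.

Lemma int_nfalse t :
  (\int[P]_w (nfalse H0 E pv alphas t w)%:E =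
   \sum_(1 <= i < t.+1 | (E i <= t)%N && (i \in H0)) \int[P]_w ((rej pv alphas i w)%:R)%:E)%E.
Proof.
rewrite -big_filter -int_sum.
- by apply: eq_integral => w _; rewrite big_filter.
- by move=> i; rewrite mem_filter mem_index_iota => /andP[_ /andP[hi _]]; exact: mrej.
- by move=> i w _; rewrite ler0n.
Qed.

Lemma int_scale t (alpha : R) : 0 <= alpha ->
  (\int[P]_w (alpha * Num.max (nrej E pv alphas t w) 1)%:E =
   alpha%:E * \int[P]_w (Num.max (nrej E pv alphas t w) 1)%:E)%E.
Proof.
move=> a0; under eq_integral do rewrite EFinM.
rewrite ge0_integralZl_EFin //.
- by move=> w _; rewrite lee_fin le_max ler01 orbT.
- by apply/measurable_EFinP; exact: max_meas.
Qed.

Lemma final t (alpha : R) :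
  (\int[P]_w (nfalse H0 E pv alphas t w)%:E <=
   alpha%:E * \int[P]_w (Num.max (nrej E pv alphas t w) 1)%:E)%E ->
  mFDR P H0 E pv alphas t <= alpha.
Proof.
move=> h; rewrite /mFDR unlock; apply: (fin_div _ _ _ _ h).
- apply: integral_ge0 => w _; rewrite lee_fin; apply: sumr_ge0 => i _; exact: ler0n.
- have <- : (\int[P]_w ((1:R)%:E) = 1)%E.
    rewrite (integral_cst P measurableT (1%:E)).
    by rewrite mul1e; exact: probability_setT.
  apply: ge0_le_integral => //;
   try (by apply/measurable_EFinP; exact: measurable_cst);
   try (by apply/measurable_EFinP; exact: max_meas);
   by move=> w _; rewrite lee_fin ?ler01 // le_max lexx orbT.
- rewrite ge0_fin_numE; last first.
    apply: integral_ge0 => w _; rewrite lee_fin le_max ler01 orbT //.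
  apply: le_lt_trans (_ : _ <= \int[P]_w ((t.+1)%:R : R)%:E)%E _; last first.
    by have := expectation_cst P ((t.+1)%:R); rewrite unlock => ->; rewrite ltey.
  apply: ge0_le_integral => //;
   try (by apply/measurable_EFinP; exact: measurable_cst);
   try (by apply/measurable_EFinP; exact: max_meas);
   try (by move=> w _; rewrite lee_fin le_max ler01 orbT).
  move=> w _; rewrite lee_fin ge_max; apply/andP; split.
    by apply: le_trans (nrej_le t w) _; rewrite ler_nat.
  by rewrite ler1n.
Qed.

End Final.

Section LORD.
Context {d : measure_display} {T : measurableType d} {R : realType}.
Variables (P : probability T R) (H0 : set nat) (E L : nat -> nat) (alpha : R)
  (pv alphas : nat -> T -> R).
Hypothesis hpv : forall t, measurable_fun setT (pv t).
Hypothesis hE : forall t, (t <= E t)%N.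
Hypothesis hL : forall t, (L t.+1 <= (L t).+1)%N.
Hypothesis hLORD : LORD_star E L alpha pv alphas.
Hypothesis hsu : cond_superuniform P H0 pv (fun t => LORD_filt E L pv alphas (E t)).

Definition YL n (w : T) k := if nonconf E L n k then rej pv alphas k w else false.

Lemma YL_def n w k : (n <= k)%N -> YL n w k = false.
Proof.
move=> h; rewrite /YL /nonconf.
have -> : (k < n)%N = false by apply/negbTE; rewrite -leqNgt.
by rewrite andbF.
Qed.

Lemma YL_sub i j w w' : (i <= j)%N -> YL j w = YL j w' -> YL i w = YL i w'.
Proof.
move=> hij e; apply/funext => k; rewrite /YL; case hc: (nonconf E L i k) => //.
have hc' := nonconf_mono E L hL i j k hij hc.
by have := congr1 (fun f => f k) e; rewrite /YL /= hc'.
Qed.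

Lemma YL_meas n : (forall k, (1 <= k < n)%N -> measurable_fun setT (alphas k)) ->
  forall k v, (k < n)%N -> measurable [set w | YL n w k = v].
Proof.
move=> hm k v hk; rewrite /YL; case hc: (nonconf E L n k) => /=.
  have hk1 : (1 <= k)%N by move: hc; rewrite /nonconf => /andP[/andP[]].
  apply: meas_bool; rewrite /rej -[X in measurable X]setTI.
  by apply: measurable_fun_le => //; apply: hm; rewrite hk1 hk.
exact: meas_const.
Qed.

Lemma alphas_meas : forall i, (1 <= i)%N -> measurable_fun setT (alphas i).
Proof.
elim/ltn_ind => i IH hi.
have [hmeas _] := hLORD i hi.
have inv := sigma_of_inv _ _ _ hmeas.
have [h [eh _]] := factor_finQ _ (tau_of _ (YL i) i) (alphas i) (fun _ => True) I (fun _ => I)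
  (fun w w' e => inv w w' (tau_inj _ _ _ _ (YL_def i) w w' e)).
have -> : alphas i = (fun w => h (tau_of _ (YL i) i w)) by apply/funext.
apply: factor_meas; apply: tau_meas => k v hk; apply: YL_meas => // k' /andP[k1 k'i].
by apply: IH.
Qed.

Lemma key_LORD i : (1 <= i)%N -> i \in H0 ->
  (\int[P]_w ((rej pv alphas i w)%:R)%:E <= \int[P]_w (alphas i w)%:E)%E.
Proof.
move=> hi hH.
set n := E i.
set tau := tau_of _ (YL n) n.
have [hmeas [ha0 _]] := hLORD i hi.
have inv := sigma_of_inv _ _ _ hmeas.
have [h [eh h0]] := factor_finQ _ tau (alphas i) (fun x => 0 <= x) (lexx 0) ha0
   (fun w w' e => inv w w' (YL_sub i n w w' (hE i) (tau_inj _ _ _ _ (YL_def n) w w' e))).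
have mt : forall b, measurable (tau @^-1` [set b]).
  apply: tau_meas => k v hk; apply: YL_meas => // k' /andP[k1 _]; exact: alphas_meas.
have -> : (\int[P]_w ((rej pv alphas i w)%:R)%:E =
           \int[P]_w ((pv i w <= h (tau w))%R%:R)%:E)%E.
  by apply: eq_integral => w _; rewrite /rej eh.
have -> : (\int[P]_w (alphas i w)%:E = \int[P]_w (h (tau w))%:E)%E.
  by apply: eq_integral => w _; rewrite eh.
apply: (K1 P _ tau (pv i) h) => // b u hu.
apply: (hsu i hi hH u hu); exact: tau_sigma.
Qed.

Lemma alpha_ge0 : 0 <= alpha.
Proof.
have [w _] := ex_point P.
have [_ [ha0 hc]] := hLORD 1 (leqnn 1).
have := hc w; rewrite big_nat1 => h.
have hm : (0:R) < Num.max (\sum_(1 <= j < 1 | nonconf E L 1 j) (rej pv alphas j w)%:R) 1.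
  by apply: (lt_le_trans ltr01); rewrite le_max lexx orbT.
by rewrite -(pmulr_lge0 _ hm); apply: le_trans (ha0 w) h.
Qed.

Lemma pw_LORD t w :
  \sum_(1 <= i < t.+1) alphas i w <= alpha * Num.max (nrej E pv alphas t w) 1.
Proof.
have a0 := alpha_ge0.
case: t => [|t].
  by rewrite big_geq // mulr_ge0 // le_max ler01 orbT.
have [_ [_ hc]] := hLORD t.+1 (ltn0Sn t).
apply: le_trans (hc w) _; apply: ler_wpM2l => //; apply: le_max2 => //.
rewrite /nrej; apply: nc_sum_le => // i; exact: ler0n.
Qed.

Lemma main_LORD t :
  (\int[P]_w (nfalse H0 E pv alphas t w)%:E <=
   alpha%:E * \int[P]_w (Num.max (nrej E pv alphas t w) 1)%:E)%E.
Proof.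
have a0 := alpha_ge0.
have hs : forall i, i \in index_iota 1 t.+1 -> (1 <= i)%N.
  by move=> i; rewrite mem_index_iota => /andP[].
have ha0 : forall i w, (1 <= i)%N -> 0 <= alphas i w.
  by move=> i w hi; have [_ [h _]] := hLORD i hi; apply: h.
rewrite (int_nfalse _ _ _ _ _ hpv alphas_meas).
apply: le_trans (_ : _ <= \sum_(1 <= i < t.+1 | (E i <= t)%N && (i \in H0))
   \int[P]_w (alphas i w)%:E)%E _.
  rewrite big_seq_cond [X in (_ <= X)%E]big_seq_cond.
  apply: lee_sum => i /andP[/hs hi /andP[_ hH]].
  exact: key_LORD.
apply: le_trans (_ : _ <= \sum_(1 <= i < t.+1) \int[P]_w (alphas i w)%:E)%E _.
  rewrite big_mkcond big_seq [X in (_ <= X)%E]big_seq; apply: lee_sum => i /hs hi.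
  case: ifP => // _; apply: integral_ge0 => w _; rewrite lee_fin; exact: ha0.
rewrite -int_sum; first last.
  by move=> i w /hs hi; exact: ha0.
  by move=> i /hs hi; exact: alphas_meas.
rewrite -(int_scale _ _ _ _ hpv alphas_meas t _ a0).
apply: ge0_le_integral => //;
  try (by move=> w _; rewrite lee_fin big_seq; apply: sumr_ge0 => i /hs hi; exact: ha0);
  try (by apply/measurable_EFinP; apply: msum => i /hs hi; exact: alphas_meas);
  try (by apply/measurable_EFinP; apply: measurable_funM; [exact: measurable_cst |
         exact: (max_meas _ _ _ hpv alphas_meas t)]).
by move=> w _; rewrite lee_fin; exact: pw_LORD.
Qed.

End LORD.

Section SAFFRON.
Context {d : measure_display} {T : measurableType d} {R : realType}.
Variables (P : probability T R) (H0 : set nat) (E L : nat -> nat) (alpha : R)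
  (pv alphas lams : nat -> T -> R).
Hypothesis hpv : forall t, measurable_fun setT (pv t).
Hypothesis hE : forall t, (t <= E t)%N.
Hypothesis hL : forall t, (L t.+1 <= (L t).+1)%N.
Hypothesis hS : SAFFRON_star E L alpha pv alphas lams.
Hypothesis hsu : cond_superuniform P H0 pv
  (fun t => SAFFRON_filt E L pv alphas lams (E t)).

Definition YS n (w : T) k : bool * bool :=
  if nonconf E L n k then (rej pv alphas k w, cand pv lams k w) else (false, false).

Lemma YS_def n w k : (n <= k)%N -> YS n w k = (false, false).
Proof.
move=> h; rewrite /YS /nonconf.
have -> : (k < n)%N = false by apply/negbTE; rewrite -leqNgt.
by rewrite andbF.
Qed.

Lemma YS_sub i j w w' : (i <= j)%N -> YS j w = YS j w' -> YS i w = YS i w'.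
Proof.
move=> hij e; apply/funext => k; rewrite /YS; case hc: (nonconf E L i k) => //.
have hc' := nonconf_mono E L hL i j k hij hc.
by have := congr1 (fun f => f k) e; rewrite /YS /= hc'.
Qed.

Lemma YS_meas n : (forall k, (1 <= k < n)%N ->
     measurable_fun setT (alphas k) /\ measurable_fun setT (lams k)) ->
  forall k v, (k < n)%N -> measurable [set w | YS n w k = v].
Proof.
move=> hm k v hk; rewrite /YS; case hc: (nonconf E L n k) => /=; last first.
  case: v => v1 v2; case: (eqVneq (false, false) (v1, v2)) => [<-|ne].
    by rewrite (_ : [set w : T | (false, false) = (false, false)] = setT) //; apply/seteqP; split.
  rewrite (_ : [set w : T | (false, false) = (v1, v2)] = set0) //.
  by apply/seteqP; split => w //= e; move: ne; rewrite e eqxx.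
have hk1 : (1 <= k)%N by move: hc; rewrite /nonconf => /andP[/andP[]].
have [ma ml] := hm k ltac:(by rewrite hk1 hk).
case: v => v1 v2.
rewrite (_ : [set w | (rej pv alphas k w, cand pv lams k w) = (v1, v2)] =
   [set w | rej pv alphas k w = v1] `&` [set w | cand pv lams k w = v2]); last first.
  by apply/seteqP; split => w /=; [case=> -> -> | case=> -> ->].
apply: measurableI; apply: meas_bool; rewrite ?/rej ?/cand -[X in measurable X]setTI;
  by apply: measurable_fun_le.
Qed.

Lemma fact_S i n : (1 <= i)%N -> (i <= n)%N ->
  exists ha hl : {ffun 'I_n -> bool * bool} -> R,
    (forall w, alphas i w = ha (tau_of _ (YS n) n w)) /\
    (forall w, lams i w = hl (tau_of _ (YS n) n w)) /\
    (forall b, 0 <= ha b) /\ (forall b, 0 <= hl b < 1).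
Proof.
move=> hi hin.
have [ma [ml [hb _]]] := hS i hi.
have inva := sigma_of_inv _ _ _ ma.
have invl := sigma_of_inv _ _ _ ml.
have e' : forall w w', tau_of _ (YS n) n w = tau_of _ (YS n) n w' -> YS i w = YS i w'.
  by move=> w w' e; apply: (YS_sub i n w w' hin); exact: (tau_inj _ _ _ _ (YS_def n) w w' e).
have [ha [eha ha0]] := factor_finQ _ (tau_of _ (YS n) n) (alphas i) (fun x => 0 <= x) (lexx 0)
  (fun w => (hb w).1) (fun w w' e => inva w w' (e' w w' e)).
have [hl [ehl hl0]] := factor_finQ _ (tau_of _ (YS n) n) (lams i) (fun x => 0 <= x < 1)
  ltac:(by rewrite /= lexx ltr01)
  (fun w => ltac:(by have [h1 [h2 h3]] := hb w; rewrite /= h3 andbT (le_trans h1 h2)))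
  (fun w w' e => invl w w' (e' w w' e)).
by exists ha, hl.
Qed.

Lemma al_meas : forall i, (1 <= i)%N ->
  measurable_fun setT (alphas i) /\ measurable_fun setT (lams i).
Proof.
elim/ltn_ind => i IH hi.
have [ha [hl [eha [ehl _]]]] := fact_S i i hi (leqnn i).
have mt : forall b, measurable (tau_of _ (YS i) i @^-1` [set b]).
  apply: tau_meas => k v hk; apply: YS_meas => // k' /andP[k1 k'i].
  by apply: IH.
split.
  have -> : alphas i = (fun w => ha (tau_of _ (YS i) i w)) by apply/funext.
  exact: factor_meas.
have -> : lams i = (fun w => hl (tau_of _ (YS i) i w)) by apply/funext.
exact: factor_meas.
Qed.

Lemma alphas_measS i : (1 <= i)%N -> measurable_fun setT (alphas i).
Proof. by move=> hi; have [] := al_meas i hi. Qed.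

Definition gS i w := alphas i w / (1 - lams i w) * (lams i w < pv i w)%R%:R.

Lemma gS_meas i : (1 <= i)%N -> measurable_fun setT (gS i).
Proof.
move=> hi.
have [ha [hl [eha [ehl _]]]] := fact_S i i hi (leqnn i).
have mt : forall b, measurable (tau_of _ (YS i) i @^-1` [set b]).
  apply: tau_meas => k v hk; apply: YS_meas => // k' /andP[k1 k'i].
  by apply: al_meas.
rewrite /gS; apply: measurable_funM.
  have -> : (fun w => alphas i w / (1 - lams i w)) =
            (fun w => (fun b => ha b / (1 - hl b)) (tau_of _ (YS i) i w)).
    by apply/funext => w; rewrite eha ehl.
  exact: (factor_meas _ (tau_of _ (YS i) i) (fun b => ha b / (1 - hl b)) mt).
apply: mind.
rewrite (_ : [set w | lams i w < pv i w] = ~` [set w | pv i w <= lams i w]).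
  apply: measurableC; rewrite -[X in measurable X]setTI; apply: measurable_fun_le => //.
  by have [] := al_meas i hi.
by apply/seteqP; split => w /=; rewrite real_ltNge ?num_real //; move/negP.
Qed.

Lemma gS_ge0 i w : (1 <= i)%N -> 0 <= gS i w.
Proof.
move=> hi; have [_ [_ [hb _]]] := hS i hi; have [h1 [h2 h3]] := hb w.
apply: mulr_ge0; last exact: ler0n.
by apply: divr_ge0 => //; rewrite subr_ge0 ltW.
Qed.

Lemma key_S i : (1 <= i)%N -> i \in H0 ->
  (\int[P]_w ((rej pv alphas i w)%:R)%:E <= \int[P]_w (gS i w)%:E)%E.
Proof.
move=> hi hH.
set n := E i.
set tau := tau_of _ (YS n) n.
have [ha [hl [eha [ehl [ha0 hl01]]]]] := fact_S i n hi (hE i).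
have mt : forall b, measurable (tau @^-1` [set b]).
  apply: tau_meas => k v hk; apply: YS_meas => // k' /andP[k1 _]; exact: al_meas.
have su : forall b u, 0 <= u <= 1 ->
   (P (tau @^-1` [set b] `&` [set w | (pv i w <= u)%R]) <= u%:E * P (tau @^-1` [set b]))%E.
  move=> b u hu; apply: (hsu i hi hH u hu); exact: tau_sigma.
have -> : (\int[P]_w ((rej pv alphas i w)%:R)%:E =
           \int[P]_w ((pv i w <= ha (tau w))%R%:R)%:E)%E.
  by apply: eq_integral => w _; rewrite /rej eha.
have -> : (\int[P]_w (gS i w)%:E =
   \int[P]_w (ha (tau w) / (1 - hl (tau w)) * (hl (tau w) < pv i w)%R%:R)%:E)%E.
  by apply: eq_integral => w _; rewrite /gS eha ehl.
apply: le_trans (K1 P _ tau (pv i) ha mt (hpv i) ha0 su) _.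
exact: (K2 P _ tau (pv i) ha hl mt (hpv i) ha0 hl01 su).
Qed.

Lemma a_ge0 j w : (1 <= j)%N -> 0 <= alphas j w / (1 - lams j w).
Proof.
move=> hj; have [_ [_ [hb _]]] := hS j hj; have [h1 [h2 h3]] := hb w.
by apply: divr_ge0 => //; rewrite subr_ge0 ltW.
Qed.

Lemma alpha_ge0S : 0 <= alpha.
Proof.
have [w _] := ex_point P.
have [_ [_ [_ hc]]] := hS 1 (leqnn 1).
have hm : (0:R) < Num.max (\sum_(1 <= j < 1 | nonconf E L 1 j) (rej pv alphas j w)%:R) 1.
  by apply: (lt_le_trans ltr01); rewrite le_max lexx orbT.
rewrite -(pmulr_lge0 _ hm); apply: le_trans (hc w).
apply: addr_ge0; apply: sum_ge0_iota => j /andP[hj _].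
  by apply: mulr_ge0; [exact: a_ge0 | exact: ler0n].
exact: a_ge0.
Qed.

Lemma pw_S t w :
  \sum_(1 <= i < t.+1) gS i w <= alpha * Num.max (nrej E pv alphas t w) 1.
Proof.
have a0 := alpha_ge0S.
case: t => [|t].
  by rewrite big_geq // mulr_ge0 // le_max ler01 orbT.
have [_ [_ [_ hc]]] := hS t.+1 (ltn0Sn t).
rewrite /gS.
apply: le_trans (split_sum E L t.+1 (fun j => alphas j w / (1 - lams j w))
   (fun j => (lams j w < pv j w)%R%:R) _ _) _.
- by move=> j /andP[hj _]; exact: a_ge0.
- by move=> j; rewrite ler0n lern1 leq_b1.
apply: le_trans (hc w) _; apply: ler_wpM2l => //; apply: le_max2 => //.
rewrite /nrej; apply: nc_sum_le => // i; exact: ler0n.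
Qed.

Lemma main_S t :
  (\int[P]_w (nfalse H0 E pv alphas t w)%:E <=
   alpha%:E * \int[P]_w (Num.max (nrej E pv alphas t w) 1)%:E)%E.
Proof.
have a0 := alpha_ge0S.
have hs : forall i, i \in index_iota 1 t.+1 -> (1 <= i)%N.
  by move=> i; rewrite mem_index_iota => /andP[].
rewrite (int_nfalse _ _ _ _ _ hpv alphas_measS).
apply: le_trans (_ : _ <= \sum_(1 <= i < t.+1 | (E i <= t)%N && (i \in H0))
   \int[P]_w (gS i w)%:E)%E _.
  rewrite big_seq_cond [X in (_ <= X)%E]big_seq_cond.
  apply: lee_sum => i /andP[/hs hi /andP[_ hH]].
  exact: key_S.
apply: le_trans (_ : _ <= \sum_(1 <= i < t.+1) \int[P]_w (gS i w)%:E)%E _.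
  rewrite big_mkcond big_seq [X in (_ <= X)%E]big_seq; apply: lee_sum => i /hs hi.
  case: ifP => // _; apply: integral_ge0 => w _; rewrite lee_fin; exact: gS_ge0.
rewrite -int_sum; first last.
  by move=> i w /hs hi; exact: gS_ge0.
  by move=> i /hs hi; exact: gS_meas.
rewrite -(int_scale _ _ _ _ hpv alphas_measS t _ a0).
apply: ge0_le_integral => //;
  try (by move=> w _; rewrite lee_fin big_seq; apply: sumr_ge0 => i /hs hi; exact: gS_ge0);
  try (by apply/measurable_EFinP; apply: msum => i /hs hi; exact: gS_meas);
  try (by apply/measurable_EFinP; apply: measurable_funM; [exact: measurable_cst |
         exact: (max_meas _ _ _ hpv alphas_measS t)]).
by move=> w _; rewrite lee_fin; exact: pw_S.
Qed.

End SAFFRON.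


Theorem theorem1 (d : measure_display) (T : measurableType d) (R : realType)
  (P : probability T R) (H0 : set nat) (E L : nat -> nat) (alpha : R)
  (pv : nat -> T -> R) :
  (forall t : nat, measurable_fun setT (pv t)) ->
  (forall t : nat, (t <= E t)%N) ->
  (forall t : nat, (L t.+1 <= (L t).+1)%N) ->
  (forall alphas : nat -> T -> R,
     LORD_star E L alpha pv alphas ->
     cond_superuniform P H0 pv
       (fun t => LORD_filt E L pv alphas (E t)) ->
     forall t : nat, mFDR P H0 E pv alphas t <= alpha)
  /\
  (forall alphas lams : nat -> T -> R,
     SAFFRON_star E L alpha pv alphas lams ->
     cond_superuniform P H0 pv
       (fun t => SAFFRON_filt E L pv alphas lams (E t)) ->
     forall t : nat, mFDR P H0 E pv alphas t <= alpha).
Proof.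
move=> hpv hE hL; split.
  move=> alphas hLORD hsu t.
  apply: (final P H0 E pv alphas hpv (alphas_meas E L alpha pv alphas hpv hLORD) t alpha).
  exact: (main_LORD P H0 E L alpha pv alphas hpv hE hL hLORD hsu t).
move=> alphas lams hS hsu t.
apply: (final P H0 E pv alphas hpv (alphas_measS E L alpha pv alphas lams hpv hL hS) t alpha).
exact: (main_S P H0 E L alpha pv alphas lams hpv hE hL hS hsu t).
Qed.
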